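(* For every integer $p\ge 3$, $${\rm gp}(S_p^2)=\begin{cases}\frac{(p+1)^2}{4}, & p\text{ odd},\\ \frac{p(p+2)}{4}, & p\text{ even},\end{cases}\qquad \#{\rm gp}(S_p^2)=\begin{cases}\binom{p}{(p+1)/2}, & p\text{ odd},\\ \binom{p+1}{(p+2)/2}, & p\text{ even}.\end{cases}$$
   Context: For $p\ge3$, $n\ge1$, the Sierpiński graph $S_p^n$ has vertex set $\{0,1,\dots,p-1\}^n$, a vertex written $i_1\cdots i_n$; vertices $i_1\cdots i_n$ and $j_1\cdots j_n$ are adjacent iff there is $h$ with $i_t=j_t$ for $t<h$, $i_h\ne j_h$, and $i_t=j_h$, $j_t=i_h$ for $t>h$. For $X\subseteq V(G)$, vertices $u,v$ are $X$-positionable if every shortest $u,v$-path $P$ satisfies $V(P)\cap X\subseteq\{u,v\}$; $X$ is a general position set if every two vertices of $X$ are $X$-positionable; ${\rm gp}(G)$ is the maximum size of a general position set and $\#{\rm gp}(G)$ the number of general position sets of that size. *)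

(* Defs.v *)
From mathcomp Require Import all_boot.
Set Implicit Arguments. Unset Strict Implicit. Unset Printing Implicit Defensive.

(* Vertices of the Sierpinski graph S_p^n: words i_1 ... i_n over {0,..,p-1},
   encoded as n-tuples of 'I_p (position h : 'I_n is letter i_{h+1}). *)
Definition sierp_vertex (p n : nat) := (n.-tuple 'I_p)%type.

Definition sierp_adj (p n : nat) : rel (sierp_vertex p n) :=
  fun u v => [exists h : 'I_n,
    [&& [forall t : 'I_n, (t < h) ==> (tnth u t == tnth v t)],
        tnth u h != tnth v h &
        [forall t : 'I_n, (h < t) ==> ((tnth u t == tnth v h) && (tnth v t == tnth u h))]]].

Arguments sierp_adj : clear implicits.

Section GP.
Variables (V : finType) (adj : rel V).

(* A u,v-walk is given as the sequence s of vertices after u: u :: s,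
   consecutive vertices adjacent, ending at v. A shortest u,v-path is such a
   walk of minimum length (necessarily a path). *)
Definition shortest_path (u v : V) (s : seq V) : Prop :=
  [/\ path adj u s, last u s = v &
      forall s' : seq V, path adj u s' -> last u s' = v -> size s <= size s'].

Definition positionable (X : {set V}) (u v : V) : Prop :=
  forall s, shortest_path u v s ->
    forall x, x \in u :: s -> x \in X -> x = u \/ x = v.

Definition gp_set (X : {set V}) : Prop :=
  forall u v, u \in X -> v \in X -> u != v -> positionable X u v.

Definition gp_number_is (k : nat) : Prop :=
  (exists X, gp_set X /\ #|X| = k) /\ (forall X, gp_set X -> #|X| <= k).

Definition num_gp_sets_is (k c : nat) : Prop :=
  exists F : {set {set V}},
    (forall X, X \in F <-> gp_set X /\ #|X| = k) /\ #|F| = c.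
End GP.

(* Main.v *)
Require Import Defs.
From mathcomp Require Import all_boot zify.
Set Implicit Arguments. Unset Strict Implicit. Unset Printing Implicit Defensive.

Definition mk (p : nat) (i a : 'I_p) : sierp_vertex p 2 := [tuple i; a].
Definition vf (p : nat) (v : sierp_vertex p 2) : 'I_p := tnth v ord0.
Definition vs (p : nat) (v : sierp_vertex p 2) : 'I_p := tnth v ord_max.

Lemma vf_mk p (i a : 'I_p) : vf (mk i a) = i. Proof. by []. Qed.
Lemma vs_mk p (i a : 'I_p) : vs (mk i a) = a. Proof. by []. Qed.
Lemma mk_eta p (v : sierp_vertex p 2) : v = mk (vf v) (vs v).
Proof.
apply: eq_from_tnth => t; case: t => [[|[|//]] h].
- by rewrite (_ : Ordinal h = ord0) //; apply: val_inj.
- by rewrite (_ : Ordinal h = ord_max) //; apply: val_inj.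
Qed.
Lemma mk_inj p (i a j b : 'I_p) : (mk i a == mk j b) = (i == j) && (a == b).
Proof.
apply/eqP/andP => [E|[/eqP -> /eqP ->]] //.
by split; apply/eqP; [have := congr1 (@vf p) E | have := congr1 (@vs p) E].
Qed.

Lemma tnth_mk0 p (i a : 'I_p) : tnth (mk i a) ord0 = i. Proof. by []. Qed.
Lemma tnth_mk1 p (i a : 'I_p) : tnth (mk i a) ord_max = a. Proof. by []. Qed.
Lemma I2_cases (t : 'I_2) : t = ord0 \/ t = ord_max.
Proof. case: t => [[|[|//]] h]; [left|right]; exact: val_inj. Qed.
Lemma forallI2 (P : pred 'I_2) : [forall t, P t] = P ord0 && P ord_max.
Proof.
apply/forallP/andP => [H|[H0 H1] t]; first by split; apply: H.
by case: (I2_cases t) => ->.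
Qed.
Lemma existsI2 (P : pred 'I_2) : [exists t, P t] = P ord0 || P ord_max.
Proof.
apply/existsP/orP => [[t]|[H|H]]; [|by exists ord0|by exists ord_max].
by case: (I2_cases t) => -> H; [left|right].
Qed.

Lemma adj_mk p (i a j b : 'I_p) :
  sierp_adj p 2 (mk i a) (mk j b) = ((i == j) && (a != b)) || [&& i != j, a == j & b == i].
Proof.
rewrite /sierp_adj existsI2 !forallI2 /= !(tnth_mk0, tnth_mk1).
case: (i =P j) => [->|/eqP ne]; case: (a =P j) => [->|/eqP na];
  case: (b =P i) => [->|/eqP nb]; rewrite ?eqxx ?andbT ?andbF ?orbF //=.
Qed.

Definition D p (u v : sierp_vertex p 2) : nat :=
  if vf u == vf v then (vs u != vs v : nat)
  else (vs u != vf v) + 1 + (vs v != vf u).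

Lemma D_mk p (i a j b : 'I_p) :
  D (mk i a) (mk j b) = if i == j then (a != b : nat) else (a != j) + 1 + (b != i).
Proof. by []. Qed.

Lemma vertexP p (v : sierp_vertex p 2) : exists i a, v = mk i a.
Proof. by exists (vf v), (vs v); apply: mk_eta. Qed.

Lemma D_adj p (u x y : sierp_vertex p 2) : sierp_adj p 2 x y -> D u y <= (D u x).+1.
Proof.
case: (vertexP u) => i [a ->]; case: (vertexP x) => k [c ->];
case: (vertexP y) => l [e ->]; rewrite adj_mk !D_mk.
case/orP => [/andP [/eqP <- _]|H].
  by case: (i == k); lia.
move: (H) => /and3P [nkl /eqP E1 /eqP E2]; rewrite E1 E2.
case: ifP => [/eqP eil|nil]; case: ifP => [/eqP eik|nik].
- by move: nkl; rewrite -eil -eik eqxx.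
- by lia.
- by rewrite eik eqxx; lia.
- by rewrite (eq_sym l) nil; lia.
Qed.

Lemma walk_D p (u w : sierp_vertex p 2) s :
  path (sierp_adj p 2) w s -> D u (last w s) <= D u w + size s.
Proof.
elim: s w => [|x s IH] w /=; first by rewrite addn0.
case/andP => Hwx Hs; apply: leq_trans (IH _ Hs) _.
by rewrite addnS -addSn leq_add2r D_adj.
Qed.

Lemma D_self p (u : sierp_vertex p 2) : D u u = 0.
Proof. by rewrite /D eqxx eqxx. Qed.

Lemma D_sym p (u v : sierp_vertex p 2) : D u v = D v u.
Proof.
rewrite /D eq_sym (eq_sym (vs u)); case: ifP => _ //; lia.
Qed.

Lemma mid_bound p (u v x : sierp_vertex p 2) s :
  path (sierp_adj p 2) u s -> last u s = v -> x \in s -> D u x + D x v <= size s.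
Proof.
move=> + + Hx.
have [s1 [s2 ->]] : exists s1 s2, s = s1 ++ x :: s2.
  by case/splitPr: Hx => s1 s2; exists s1, s2.
rewrite cat_path last_cat /= => /andP [H1 /andP [H2 H3]] Hl'.
have A : D u x <= (size s1).+1.
  have := walk_D u (s := rcons s1 x) (w := u); rewrite last_rcons D_self size_rcons.
  by apply; rewrite rcons_path H1 H2.
have B : D x v <= size s2.
  by rewrite -Hl'; have := walk_D x H3; rewrite D_self.
rewrite size_cat /=; lia.
Qed.

Lemma R1 p (X : {set sierp_vertex p 2}) (i a j b : 'I_p) :
  gp_set (sierp_adj p 2) X -> mk i a \in X -> mk i j \in X -> mk j b \in X ->
  i != j -> a != j -> False.
Proof.
move=> H Hu Hij Hv nij naj.
have Huv : mk i a != mk j b by rewrite mk_inj (negbTE nij).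
have Hpos := H _ _ Hu Hv Huv.
have key : forall s, shortest_path (sierp_adj p 2) (mk i a) (mk j b) s ->
    mk i j \in s -> False.
  move=> s sp Hin.
  have [] := Hpos s sp (mk i j); first by rewrite inE Hin orbT.
  - exact: Hij.
  - by move/eqP; rewrite mk_inj eqxx /= eq_sym (negbTE naj).
  - by move/eqP; rewrite mk_inj (negbTE nij).
case: (b =P i) => [Ebi|/eqP nbi].
- subst b; apply: (key [:: mk i j; mk j i]); last by rewrite inE eqxx.
  split => //.
  + by rewrite /= !adj_mk eqxx naj nij /= eqxx orbT.
  + move=> s' Hp Hl; have := walk_D (mk i a) Hp.
    by rewrite Hl D_self D_mk (negbTE nij) naj eqxx.
- apply: (key [:: mk i j; mk j i; mk j b]); last by rewrite inE eqxx.
  split => //.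
  + by rewrite /= !adj_mk eqxx naj nij /= !eqxx /= orbF (eq_sym i b) nbi ?orbT.
  + move=> s' Hp Hl; have := walk_D (mk i a) Hp.
    by rewrite Hl D_self D_mk (negbTE nij) naj nbi.
Qed.

Definition row p (X : {set sierp_vertex p 2}) (i : 'I_p) := [set a | mk i a \in X].
Definition Cof p (X : {set sierp_vertex p 2}) := [set i : 'I_p | [exists a, mk i a \in X]].
Definition Aset p (C : {set 'I_p}) (i : 'I_p) := [set a | (a \notin C) || (a == i)].
Definition XC p (C : {set 'I_p}) : {set sierp_vertex p 2} :=
  [set v | (vf v \in C) && ((vs v \notin C) || (vs v == vf v))].

Lemma mem_XC p (C : {set 'I_p}) i a :
  (mk i a \in XC C) = (i \in C) && ((a \notin C) || (a == i)).
Proof. by rewrite inE vf_mk vs_mk. Qed.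

Lemma mk_injr p (i : 'I_p) : injective (mk i).
Proof. by move=> a b /eqP; rewrite mk_inj eqxx => /eqP. Qed.

Lemma card_rows p (X : {set sierp_vertex p 2}) : #|X| = \sum_i #|row X i|.
Proof.
rewrite -sum1_card (partition_big (@vf p) predT) //=.
apply: eq_bigr => i _.
rewrite -(card_imset _ (@mk_injr p i)) -sum1_card.
apply: eq_bigl => v /=.
apply/andP/imsetP => [[vX /eqP <-]|[a aR ->]].
  by exists (vs v); [rewrite inE -mk_eta | exact: mk_eta].
by move: aR; rewrite inE vf_mk.
Qed.

Lemma card_Aset p (C : {set 'I_p}) i : i \in C -> #|Aset C i| = p.+1 - #|C|.
Proof.
move=> iC.
have -> : Aset C i = i |: ~: C by apply/setP=> a; rewrite !inE orbC.
rewrite cardsU1 inE iC /=.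
have := cardsC C; rewrite card_ord. move: #|~: C| #|C| => x y E. lia.
Qed.

Lemma card_le_p p (C : {set 'I_p}) : #|C| <= p.
Proof. have := cardsC C; rewrite card_ord; move: #|~: C| #|C| => x y E; lia. Qed.

Lemma row_sub p (X : {set sierp_vertex p 2}) i :
  gp_set (sierp_adj p 2) X -> 1 < #|row X i| -> row X i \subset Aset (Cof X) i.
Proof.
move=> H c2; apply/subsetP => a aR; rewrite inE.
case: (eqVneq a i) => [_|nai]; rewrite ?orbT //= orbF.
apply/negP; rewrite inE => /existsP [b Hb].
have : 0 < #|row X i :\ a| by move: c2; rewrite (cardsD1 a) aR /= add1n ltnS.
rewrite card_gt0 => /set0Pn [a' /setD1P [na' a'R]].
have nia : i != a by rewrite eq_sym.
move: aR a'R; rewrite !inE => aR a'R.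
exact: (R1 H a'R aR Hb nia na').
Qed.

Lemma row_out p (X : {set sierp_vertex p 2}) i : i \notin Cof X -> row X i = set0.
Proof.
move=> iC; apply/setP => a; rewrite !inE; apply/negP => H.
by move: iC; rewrite inE negb_exists => /forallP /(_ a); rewrite H.
Qed.

Lemma row_bound p (X : {set sierp_vertex p 2}) i :
  gp_set (sierp_adj p 2) X ->
  #|row X i| <= if i \in Cof X then p.+1 - #|Cof X| else 0.
Proof.
move=> H; case: ifP => iC; last by rewrite row_out ?iC // cards0.
case: (leqP #|row X i| 1) => h.
  by have := card_le_p (Cof X); move: h; move: #|row X i| #|Cof X| => x y; lia.
by rewrite -(card_Aset iC) //; apply: subset_leq_card; apply: row_sub.
Qed.

Lemma sum_if p (C : {set 'I_p}) (K : nat) :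
  \sum_(i < p) (if i \in C then K else 0) = #|C| * K.
Proof. by rewrite -big_mkcond sum_nat_const. Qed.

Lemma gp_upper p (X : {set sierp_vertex p 2}) :
  gp_set (sierp_adj p 2) X -> #|X| <= #|Cof X| * (p.+1 - #|Cof X|).
Proof.
move=> H; rewrite card_rows -sum_if; apply: leq_sum => i _; exact: row_bound.
Qed.

Lemma sum_eq_le (I : finType) (g h : I -> nat) :
  (forall i, g i <= h i) -> \sum_i g i = \sum_i h i -> forall i, g i = h i.
Proof.
move=> le E i; apply/eqP; rewrite eqn_leq le /= leqNgt; apply/negP => lt.
have : \sum_i g i < \sum_i h i.
  rewrite (bigD1 i) //= [X in _ < X](bigD1 i) //= -addSn.
  by apply: leq_add => //; apply: leq_sum => j _; exact: le.
by rewrite E ltnn.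
Qed.

Lemma gp_eq p (X : {set sierp_vertex p 2}) :
  gp_set (sierp_adj p 2) X -> #|X| = #|Cof X| * (p.+1 - #|Cof X|) ->
  1 < p.+1 - #|Cof X| -> X = XC (Cof X).
Proof.
move=> H E c2.
have Er : forall i, i \in Cof X -> row X i = Aset (Cof X) i.
  move=> i iC.
  have ci : #|row X i| = p.+1 - #|Cof X|.
    have := sum_eq_le (fun i => row_bound i H) _ i; rewrite iC; apply.
    by rewrite sum_if -E card_rows.
  apply/setP; apply/subset_cardP; first by rewrite ci card_Aset.
  by apply: row_sub => //; rewrite ci.
apply/setP => v; rewrite (mk_eta v) mem_XC; set i := vf v; set a := vs v.
apply/idP/andP => [Hv|[iC Ha]].
  have iC : i \in Cof X by rewrite inE; apply/existsP; exists a.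
  split => //.
  have : a \in row X i by rewrite inE.
  by rewrite Er // inE.
have : a \in Aset (Cof X) i by rewrite inE.
by rewrite -Er // inE.
Qed.

Lemma card_XC p (C : {set 'I_p}) : #|XC C| = #|C| * (p.+1 - #|C|).
Proof.
rewrite card_rows -sum_if; apply: eq_bigr => i _; case: ifP => iC.
  rewrite -(card_Aset iC); apply: eq_card => a.
  by rewrite !inE vf_mk vs_mk iC.
rewrite (_ : row _ _ = set0) ?cards0 //; apply/setP => a.
by rewrite !inE vf_mk vs_mk iC.
Qed.

Lemma XC_inj p : injective (@XC p).
Proof.
move=> C1 C2 E; apply/setP => i.
have : (mk i i \in XC C1) = (mk i i \in XC C2) by rewrite E.
by rewrite !mem_XC eqxx !orbT !andbT.
Qed.

Lemma D_pos p (u v : sierp_vertex p 2) : u != v -> 0 < D u v.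
Proof.
case: (vertexP u) => i [a ->]; case: (vertexP v) => j [b ->].
rewrite mk_inj D_mk; case: ifP => [_ |_ _]; last by rewrite addn1 ltn0Sn.
by rewrite /= lt0b.
Qed.

Lemma D_le1 p (u v : sierp_vertex p 2) : vf u = vf v -> D u v <= 1.
Proof. by rewrite /D => ->; rewrite eqxx leq_b1. Qed.

Lemma D_XC3 p (C : {set 'I_p}) (u v : sierp_vertex p 2) :
  u \in XC C -> v \in XC C -> vf u != vf v -> D u v = 3.
Proof.
case: (vertexP u) => i [a ->]; case: (vertexP v) => j [b ->].
rewrite !mem_XC !vf_mk D_mk => /andP [iC Ha] /andP [jC Hb] nij.
rewrite (negbTE nij).
have -> : a != j.
  apply/eqP => E; move: Ha; rewrite E jC /= => /eqP E'; by rewrite E' eqxx in nij.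
have -> : b != i.
  apply/eqP => E; move: Hb; rewrite E iC /= => /eqP E'; by rewrite E' eqxx in nij.
by [].
Qed.

Lemma XC_geo p (C : {set 'I_p}) (u v x : sierp_vertex p 2) :
  u \in XC C -> v \in XC C -> x \in XC C -> u != v -> x != u -> x != v ->
  D u v < D u x + D x v.
Proof.
move=> uX vX xX nuv nxu nxv.
have p1 := D_pos nxu; have p2 := D_pos nxv.
rewrite D_sym in p1.
case: (eqVneq (vf u) (vf v)) => [E|ne].
  have := D_le1 E; move: p1 p2; move: (D u v) (D u x) (D x v) => *; lia.
rewrite (D_XC3 uX vX ne).
case: (eqVneq (vf x) (vf u)) => [E1|n1].
  have n2 : vf x != vf v by rewrite E1.
  rewrite (D_XC3 xX vX n2); move: p1; move: (D u x) => *; lia.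
rewrite eq_sym in n1; rewrite (D_XC3 uX xX n1); move: p2; move: (D x v) => *; lia.
Qed.

Lemma walk_XC p (C : {set 'I_p}) (u v : sierp_vertex p 2) :
  u \in XC C -> v \in XC C -> u != v ->
  exists s, [/\ path (sierp_adj p 2) u s, last u s = v & size s = D u v].
Proof.
move=> uX vX nuv.
case: (eqVneq (vf u) (vf v)) => [E|ne].
  exists [:: v]; split => //=.
    move: nuv E; rewrite (mk_eta u) (mk_eta v) !vf_mk mk_inj adj_mk => N E'.
    by rewrite E' eqxx /= in N *; rewrite N.
  move: nuv E; rewrite (mk_eta u) (mk_eta v) !vf_mk mk_inj D_mk => N E'.
  by rewrite E' eqxx /= in N *; rewrite N.
rewrite (D_XC3 uX vX ne).
move: uX vX ne; rewrite (mk_eta u) (mk_eta v) !mem_XC !vf_mk.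
move: (vf u) (vs u) (vf v) (vs v) => i a j b /andP [iC Ha] /andP [jC Hb] nij.
have naj : a != j.
  apply/eqP => E; move: Ha; rewrite E jC /= => /eqP E'; by rewrite E' eqxx in nij.
have nbi : b != i.
  apply/eqP => E; move: Hb; rewrite E iC /= => /eqP E'; by rewrite E' eqxx in nij.
exists [:: mk i j; mk j i; mk j b]; split => //=.
by rewrite !adj_mk eqxx naj nij /= !eqxx /= orbF (eq_sym i b) nbi ?orbT.
Qed.

Lemma gp_XC p (C : {set 'I_p}) : gp_set (sierp_adj p 2) (XC C).
Proof.
move=> u v uX vX nuv s [Hp Hl Hmin] x Hx xX.
rewrite inE in Hx; case/orP: Hx => [/eqP ->|Hx]; first by left.
case: (eqVneq x v) => [->|nxv]; first by right.
case: (eqVneq x u) => [->|nxu]; first by left.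
exfalso.
have M := mid_bound Hp Hl Hx.
have [s' [P1 P2 P3]] := walk_XC uX vX nuv.
have L := Hmin s' P1 P2.
have G := XC_geo uX vX xX nuv nxu nxv.
move: M L G; rewrite P3; move: (size s) (D u v) (D u x) (D x v) => *; lia.
Qed.
Lemma arith p m : 3 <= p -> m <= p ->
  let k := if odd p then (p.+1 ^ 2) %/ 4 else (p * p.+2) %/ 4 in
  (m * (p.+1 - m) <= k) /\
  ((m * (p.+1 - m) == k) = (if odd p then m == p.+1 %/ 2 else (m == p %/ 2) || (m == p.+2 %/ 2))).
Proof.
move=> hp hm /=.
have := odd_double_half p; case: (odd p) => /= E.
  rewrite -E; move: (p./2) E => q E.
  have K : (1 + q.*2).+1 ^ 2 %/ 4 = q.+1 * q.+1 by lia.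
  have K2 : (1 + q.*2).+1 %/ 2 = q.+1 by lia.
  rewrite K K2; split.
    case: (leqP m q.+1) => h; nia.
  apply/eqP/eqP => [H|->]; last by lia.
  case: (ltngtP m q.+1) => h //; nia.
rewrite -E; move: (p./2) E => q E.
have K : q.*2 * (q.*2).+2 %/ 4 = q * q.+1 by lia.
have K2 : (q.*2).+2 %/ 2 = q.+1 by lia.
have K3 : q.*2 %/ 2 = q by lia.
rewrite K K2 K3; split.
  case: (leqP m q) => h; nia.
apply/eqP/orP => [H|[/eqP ->|/eqP ->]]; try lia.
case: (ltngtP m q) => h; [nia| |by left].
case: (ltngtP m q.+1) => h'; [nia|nia|by right].
Qed.

Theorem corollary3p2 (p : nat) (hp : 3 <= p) :
  let k := if odd p then (p.+1 ^ 2) %/ 4 else (p * p.+2) %/ 4 in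
  let c := if odd p then 'C(p, p.+1 %/ 2) else 'C(p.+1, p.+2 %/ 2) in
  gp_number_is (sierp_adj p 2) k /\ num_gp_sets_is (sierp_adj p 2) k c.
Proof.
move=> k c.
have A : forall m, m <= p -> (m * (p.+1 - m) <= k) /\
  ((m * (p.+1 - m) == k) = (if odd p then m == p.+1 %/ 2 else (m == p %/ 2) || (m == p.+2 %/ 2))).
  by move=> m hm; apply: arith.
have ub : forall X : {set sierp_vertex p 2}, gp_set (sierp_adj p 2) X -> #|X| <= k.
  move=> X H; apply: leq_trans (gp_upper H) _; exact: (A _ (card_le_p _)).1.
pose good := [set C : {set 'I_p} | #|C| * (p.+1 - #|C|) == k].
have goodX : forall C, C \in good -> gp_set (sierp_adj p 2) (XC C) /\ #|XC C| = k.
  by move=> C; rewrite inE => /eqP HC; split; [apply: gp_XC | rewrite card_XC].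
split.
  split => //.
  pose m0 := if odd p then p.+1 %/ 2 else p %/ 2.
  have hm0 : m0 <= p by rewrite /m0; case: (odd p); lia.
  have : 0 < #|[set C : {set 'I_p} | #|C| == m0]| by rewrite card_draws card_ord bin_gt0.
  rewrite card_gt0 => /set0Pn [C]; rewrite inE => /eqP HC.
  exists (XC C); apply: goodX; rewrite inE; rewrite (A _ (card_le_p _)).2 HC /m0.
  by case: (odd p); rewrite eqxx.
exists (@XC p @: good); split.
  move=> X; split.
    by case/imsetP => C HC ->; apply: goodX.
  case=> H HX.
  have E : #|X| = #|Cof X| * (p.+1 - #|Cof X|).
    apply/eqP; rewrite eqn_leq gp_upper // HX; exact: (A _ (card_le_p _)).1.
  have Hg : (#|Cof X| * (p.+1 - #|Cof X|) == k) by rewrite -E HX.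
  have c2 : 1 < p.+1 - #|Cof X|.
    move: Hg; rewrite (A _ (card_le_p _)).2.
    by case: (odd p) => /=; [move/eqP ->; lia | case/orP => /eqP ->; lia].
  rewrite (gp_eq H E c2); apply/imsetP; exists (Cof X) => //.
  by rewrite inE.
rewrite (card_imset _ (@XC_inj p)).
rewrite /c; case Op: (odd p).
  rewrite -[in RHS](card_ord p) -card_draws; apply: eq_card => C.
  by rewrite !inE (A _ (card_le_p _)).2 Op card_ord.
have -> : good = [set C : {set 'I_p} | #|C| == p %/ 2] :|: [set C : {set 'I_p} | #|C| == p.+2 %/ 2].
  by apply/setP => C; rewrite !inE (A _ (card_le_p _)).2 Op.
rewrite cardsU !card_draws card_ord.
have -> : [set C : {set 'I_p} | #|C| == p %/ 2] :&: [set C : {set 'I_p} | #|C| == p.+2 %/ 2] = set0.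
  apply/setP => C; rewrite !inE; apply/negP => /andP [/eqP -> /eqP]; lia.
have -> : p.+2 %/ 2 = (p %/ 2).+1 by lia.
by rewrite cards0 subn0 binS addnC.
Qed.
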